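(* Let $G$ be an infinite supersoluble group with no elements of order $2$ (no involutions) such that every non-abelian subgroup $H$ of $G$ satisfies $C_G(H)\le H$. Then $G$ is abelian.
   Context: A group is supersoluble if it has a normal series (each term normal in the whole group) with cyclic factors. $C_G(H)$ denotes the centralizer of $H$ in $G$. *)

(* Defs.v *)
From Stdlib Require Import ZArith List.

Record group := Group {
  carrier :> Type;
  gmul : carrier -> carrier -> carrier;
  gone : carrier;
  ginv : carrier -> carrier;
  gmulA : forall x y z, gmul x (gmul y z) = gmul (gmul x y) z;
  gmul1l : forall x, gmul gone x = x;
  gmulVl : forall x, gmul (ginv x) x = gone
}.

Arguments gmul {g}.
Arguments gone {g}.
Arguments ginv {g}.

Fixpoint gpow_nat {G : group} (x : G) (n : nat) : G :=
  match n with O => gone | S n => gmul x (gpow_nat x n) end.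

Definition gpow {G : group} (x : G) (k : Z) : G :=
  match k with
  | Z0 => gone
  | Zpos p => gpow_nat x (Pos.to_nat p)
  | Zneg p => ginv (gpow_nat x (Pos.to_nat p))
  end.

Definition is_subgroup {G : group} (H : G -> Prop) : Prop :=
  H gone /\ (forall x y, H x -> H y -> H (gmul x y)) /\ (forall x, H x -> H (ginv x)).

Definition is_normal {G : group} (H : G -> Prop) : Prop :=
  is_subgroup H /\ forall g x, H x -> H (gmul (ginv g) (gmul x g)).

(* B/A is cyclic (A <= B): some g in B with every x in B equal to g^k * a, a in A *)
Definition cyclic_factor {G : group} (B A : G -> Prop) : Prop :=
  exists g, B g /\ forall x, B x -> exists (k : Z) (a : G), A a /\ x = gmul (gpow g k) a.

Definition supersoluble (G : group) : Prop :=
  exists (n : nat) (S : nat -> G -> Prop),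
    (forall x, S 0 x <-> x = gone) /\
    (forall x, S n x) /\
    (forall i, i <= n -> is_normal (S i)) /\
    (forall i, i < n -> (forall x, S i x -> S (Datatypes.S i) x) /\
                        cyclic_factor (S (Datatypes.S i)) (S i)).

Definition infinite_group (G : group) : Prop :=
  ~ exists l : list G, forall x : G, In x l.

Definition no_involutions (G : group) : Prop :=
  forall x : G, gmul x x = gone -> x = gone.

Definition abelian_group (G : group) : Prop :=
  forall x y : G, gmul x y = gmul y x.

Definition nonabelian_subgroup {G : group} (H : G -> Prop) : Prop :=
  is_subgroup H /\ exists x y, H x /\ H y /\ gmul x y <> gmul y x.

Definition centralizer_in {G : group} (H : G -> Prop) : Prop :=
  forall g : G, (forall h, H h -> gmul g h = gmul h g) -> H g.

(* Main.v *)
Require Import Defs.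
From Stdlib Require Import ZArith List Lia Classical ClassicalEpsilon.

Lemma PH : forall m (f : nat -> nat), (forall t, t <= m -> f t < m) ->
  exists t1 t2, t1 < t2 <= m /\ f t1 = f t2.
Proof.
  induction m; intros f Hf.
  - specialize (Hf 0 (le_n 0)). lia.
  - destruct (classic (exists t, t <= m /\ f t = f (S m))) as [[t [Ht E]]|Hn].
    + exists t, (S m). split; [lia|auto].
    + set (f' := fun t => if f t <? f (S m) then f t else f t - 1).
      destruct (IHm f') as [t1 [t2 [Ht E]]].
      { intros t Ht. unfold f'. assert (f t <> f (S m)) by (intro; apply Hn; eauto).
        pose proof (Hf t ltac:(lia)). pose proof (Hf (S m) (le_n _)).
        destruct (Nat.ltb_spec (f t) (f (S m))); lia. }
      exists t1, t2. split; [lia|]. unfold f' in E.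
      assert (f t1 <> f (S m)) by (intro; apply Hn; exists t1; split; [lia|auto]).
      assert (f t2 <> f (S m)) by (intro; apply Hn; exists t2; split; [lia|auto]).
      destruct (Nat.ltb_spec (f t1) (f (S m))); destruct (Nat.ltb_spec (f t2) (f (S m))); lia.
Qed.

Lemma PH_list {A : Type} (d : A) : forall (L : list A) (u : nat -> A),
  (forall t, t <= length L -> In (u t) L) ->
  exists t1 t2, t1 < t2 <= length L /\ u t1 = u t2.
Proof.
  intros L u Hu.
  set (f := fun t => epsilon (inhabits 0) (fun n => n < length L /\ nth n L d = u t)).
  assert (Hf : forall t, t <= length L -> f t < length L /\ nth (f t) L d = u t).
  { intros t Ht. unfold f. apply epsilon_spec.
    destruct (In_nth L (u t) d (Hu t Ht)) as [n [Hn E]]. eauto. }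
  destruct (PH (length L) f) as [t1 [t2 [Ht E]]].
  { intros t Ht. apply Hf; auto. }
  exists t1, t2. split; auto.
  rewrite <- (proj2 (Hf t1 ltac:(lia))), <- (proj2 (Hf t2 ltac:(lia))), E. auto.
Qed.

Open Scope Z_scope.

Section Basics.
Variable G : group.
Local Infix "**" := (@gmul G) (at level 40, left associativity).
Local Notation "1" := (@gone G).
Local Notation inv := (@ginv G).

Lemma mulA (x y z : G) : x ** (y ** z) = x ** y ** z.
Proof. apply gmulA. Qed.
Lemma mul1 (x : G) : 1 ** x = x.
Proof. apply gmul1l. Qed.
Lemma mulV (x : G) : inv x ** x = 1.
Proof. apply gmulVl. Qed.
Lemma mulVr (x : G) : x ** inv x = 1.
Proof.
  rewrite <- (mul1 (x ** inv x)).
  rewrite <- (mulV (inv x)) at 1.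
  rewrite <- mulA. rewrite (mulA (inv x) x (inv x)). rewrite mulV, mul1. apply mulV.
Qed.
Lemma mulr1 (x : G) : x ** 1 = x.
Proof. rewrite <- (mulV x), mulA, mulVr, mul1. reflexivity. Qed.
Lemma mulKl (x y : G) : inv x ** (x ** y) = y.
Proof. rewrite mulA, mulV, mul1; auto. Qed.
Lemma mulKr (x y : G) : x ** (inv x ** y) = y.
Proof. rewrite mulA, mulVr, mul1; auto. Qed.
Lemma mulKl' (x y : G) : y ** x ** inv x = y.
Proof. rewrite <- mulA, mulVr, mulr1; auto. Qed.
Lemma mulKr' (x y : G) : y ** inv x ** x = y.
Proof. rewrite <- mulA, mulV, mulr1; auto. Qed.
Lemma mul_cancel_l (x y z : G) : x ** y = x ** z -> y = z.
Proof. intro H. rewrite <- (mulKl x y), H, mulKl; auto. Qed.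
Lemma mul_cancel_r (x y z : G) : y ** x = z ** x -> y = z.
Proof. intro H. rewrite <- (mulKl' x y), H, mulKl'; auto. Qed.
Lemma inv_uniq (x y : G) : x ** y = 1 -> y = inv x.
Proof. intro H. apply (mul_cancel_l x). rewrite H, mulVr; auto. Qed.
Lemma invK (x : G) : inv (inv x) = x.
Proof. symmetry. apply inv_uniq. apply mulV. Qed.
Lemma inv1 : inv 1 = 1.
Proof. symmetry. apply inv_uniq. apply mul1. Qed.
Lemma invM (x y : G) : inv (x ** y) = inv y ** inv x.
Proof. symmetry. apply inv_uniq. rewrite mulA, <- (mulA x y), mulVr, mulr1, mulVr; auto. Qed.
Lemma inv_inj (x y : G) : inv x = inv y -> x = y.
Proof. intro H. rewrite <- (invK x), H, invK; auto. Qed.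
Lemma eq_mulV (x y : G) : x ** inv y = 1 -> x = y.
Proof. intro H. apply (mul_cancel_r (inv y)). rewrite H, mulVr; auto. Qed.

Fixpoint pn (x : G) (n : nat) : G := match n with O => 1 | S n => x ** pn x n end.
Lemma pn_eq x n : gpow_nat x n = pn x n.
Proof. induction n; simpl; congruence. Qed.

Definition gp (x : G) (k : Z) : G := gpow x k.

Lemma pn_comm x n : pn x n ** x = x ** pn x n.
Proof. induction n; simpl. rewrite mul1, mulr1; auto. rewrite <- mulA, IHn; auto. Qed.

Lemma gp_nat x n : gp x (Z.of_nat n) = pn x n.
Proof. unfold gp, gpow. destruct n. reflexivity. simpl Z.of_nat. cbv iota.
  rewrite (SuccNat2Pos.id_succ n : Pos.to_nat (PosDef.Pos.of_succ_nat n) = _), pn_eq. reflexivity. Qed.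
Lemma gp_neg_nat x n : gp x (- Z.of_nat n) = inv (pn x n).
Proof. unfold gp, gpow. destruct n. simpl. rewrite inv1; auto. simpl Z.of_nat. simpl Z.opp. cbv iota.
  rewrite (SuccNat2Pos.id_succ n : Pos.to_nat (PosDef.Pos.of_succ_nat n) = _), pn_eq. reflexivity. Qed.

Lemma gp_succ x k : gp x (Z.succ k) = x ** gp x k.
Proof.
  destruct (Z_le_gt_dec 0 k).
  - rewrite <- (Z2Nat.id k) by lia. rewrite <- Nat2Z.inj_succ, !gp_nat. reflexivity.
  - assert (k = - Z.of_nat (S (Z.to_nat (- k - 1)))) by lia.
    rewrite H. replace (Z.succ (- Z.of_nat (S (Z.to_nat (- k - 1))))) with (- Z.of_nat (Z.to_nat (-k-1))) by lia.
    rewrite !gp_neg_nat. simpl pn. rewrite <- pn_comm, invM, mulA, mulVr, mul1; auto.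
Qed.

Lemma gp0 x : gp x 0 = 1. Proof. reflexivity. Qed.
Lemma gp1 x : gp x 1 = x. Proof. unfold gp; simpl. apply mulr1. Qed.

Lemma gp_pred x k : gp x (Z.pred k) = inv x ** gp x k.
Proof. rewrite <- (Z.succ_pred k) at 2. rewrite gp_succ, mulKl; auto. Qed.

Lemma gp_add x a b : gp x (a + b) = gp x a ** gp x b.
Proof.
  induction a using Z.peano_ind.
  - rewrite Z.add_0_l, gp0, mul1; auto.
  - rewrite Z.add_succ_l, !gp_succ, IHa, mulA; auto.
  - rewrite Z.add_pred_l, !gp_pred, IHa, mulA; auto.
Qed.

Lemma gp_opp x a : gp x (- a) = inv (gp x a).
Proof. apply inv_uniq. rewrite <- gp_add. replace (a + - a) with 0 by lia. auto. Qed.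

Lemma gp_sub x a b : gp x (a - b) = gp x a ** inv (gp x b).
Proof. unfold Z.sub. rewrite gp_add, gp_opp; auto. Qed.

Lemma gp_comm_self x a b : gp x a ** gp x b = gp x b ** gp x a.
Proof. rewrite <- !gp_add, Z.add_comm; auto. Qed.

Lemma gp_comm_base x a : gp x a ** x = x ** gp x a.
Proof. pose proof (gp_comm_self x a 1) as H; rewrite gp1 in H; exact H. Qed.

Lemma gp_mul x a b : gp x (a * b) = gp (gp x a) b.
Proof.
  induction b using Z.peano_ind.
  - rewrite Z.mul_0_r; auto.
  - rewrite Z.mul_succ_r, gp_add, IHb, gp_succ.
    apply gp_comm_base.
  - rewrite Z.mul_pred_r, gp_sub, IHb, gp_pred.
    set (y := gp x a). replace (inv y) with (gp y (-1)) by (change (-1) with (-(1)); rewrite gp_opp, gp1; auto).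
    apply gp_comm_self.
Qed.

Definition cj (h x : G) : G := inv h ** (x ** h).

Lemma cjM h x y : cj h (x ** y) = cj h x ** cj h y.
Proof. unfold cj. rewrite !mulA, mulKl'. auto. Qed.
Lemma cj1 h : cj h 1 = 1.
Proof. unfold cj. rewrite mul1, mulV; auto. Qed.
Lemma cjV h x : cj h (inv x) = inv (cj h x).
Proof. apply inv_uniq. rewrite <- cjM, mulVr, cj1; auto. Qed.
Lemma cj_gp h x k : cj h (gp x k) = gp (cj h x) k.
Proof.
  induction k using Z.peano_ind.
  - apply cj1.
  - rewrite !gp_succ, cjM, IHk; auto.
  - rewrite !gp_pred, cjM, IHk, cjV; auto.
Qed.
Lemma cj_comp h k x : cj (h ** k) x = cj k (cj h x).
Proof. unfold cj. rewrite invM, !mulA. auto. Qed.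
Lemma cj_id x : cj 1 x = x.
Proof. unfold cj. rewrite inv1, mul1, mulr1; auto. Qed.
Lemma cj_gp_add h a b x : cj (gp h a) (cj (gp h b) x) = cj (gp h (b + a)) x.
Proof. rewrite gp_add, cj_comp; auto. Qed.
Lemma cj_inv_l h x : cj h (cj (inv h) x) = x.
Proof. rewrite <- cj_comp, mulV, cj_id; auto. Qed.
Lemma cj_inv_r h x : cj (inv h) (cj h x) = x.
Proof. rewrite <- cj_comp, mulVr, cj_id; auto. Qed.
Lemma cj_eq h x : cj h x = x <-> h ** x = x ** h.
Proof. unfold cj. split; intro H.
  - rewrite <- H at 1. rewrite mulKr; auto.
  - rewrite <- H, mulKl; auto. Qed.
Lemma cj_inj h x y : cj h x = cj h y -> x = y.
Proof. intro H. rewrite <- (cj_inv_r h x), H, cj_inv_r; auto. Qed.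

Definition comm (x y : G) := x ** y = y ** x.

Lemma comm_sym x y : comm x y -> comm y x.
Proof. unfold comm; auto. Qed.
Lemma comm_gp_l x y a : comm x y -> comm (gp x a) y.
Proof. intro H. apply comm_sym in H. apply comm_sym. unfold comm in *. apply cj_eq in H. apply cj_eq.
  rewrite cj_gp, H; auto. Qed.
Lemma comm_gp_r x y a : comm x y -> comm x (gp y a).
Proof. intro H. apply comm_sym, comm_gp_l, comm_sym; auto. Qed.
Lemma comm_gp x y a b : comm x y -> comm (gp x a) (gp y b).
Proof. intro H. apply comm_gp_l, comm_gp_r; auto. Qed.
Lemma comm_M x y z : comm x y -> comm x z -> comm x (y ** z).
Proof. unfold comm; intros H1 H2. rewrite mulA, H1, <- mulA, H2, mulA; auto. Qed.
Lemma comm_V x y : comm x y -> comm x (inv y).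
Proof. unfold comm; intros H. apply (mul_cancel_l y). rewrite mulA, <- H, <- mulA, mulVr, mulr1, mulKr. auto. Qed.
Lemma comm_refl x : comm x x. Proof. reflexivity. Qed.
Lemma comm_1 x : comm x 1. Proof. unfold comm; rewrite mul1, mulr1; auto. Qed.
Lemma gp_mulC x y k : comm x y -> gp (x ** y) k = gp x k ** gp y k.
Proof.
  intro H. induction k using Z.peano_ind.
  - rewrite !gp0, mul1; auto.
  - rewrite !gp_succ, IHk. rewrite <- !mulA. f_equal. rewrite !mulA. f_equal.
    symmetry. apply comm_gp_l; auto.
  - rewrite !gp_pred, IHk, invM.
    assert (C1 : inv y ** inv x = inv x ** inv y).
    { rewrite <- !invM. f_equal. apply H. }
    assert (C2 : inv y ** gp x k = gp x k ** inv y).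
    { change (comm (inv y) (gp x k)). apply comm_sym, comm_V, comm_gp_l; auto. }
    rewrite C1. rewrite <- (mulA (inv x) (inv y)). rewrite (mulA (inv y)). rewrite C2.
    rewrite !mulA. auto.
Qed.
Lemma gp_gone k : gp 1 k = 1.
Proof. induction k using Z.peano_ind; [auto| rewrite gp_succ, IHk, mul1; auto | rewrite gp_pred, IHk, inv1, mul1; auto]. Qed.
Lemma gp_inv x k : gp (inv x) k = inv (gp x k).
Proof. apply inv_uniq. rewrite <- gp_mulC. rewrite mulVr, gp_gone; auto. unfold comm. rewrite mulV, mulVr; auto. Qed.

Lemma sub_gp (H : G -> Prop) x k : is_subgroup H -> H x -> H (gp x k).
Proof.
  intros [H1 [HM HV]] Hx. induction k using Z.peano_ind.
  - apply H1.
  - rewrite gp_succ; auto.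
  - rewrite gp_pred; auto.
Qed.

Lemma phi_1 (Q : G -> Prop) (phi : G -> Z) : is_subgroup Q ->
  (forall x y, Q x -> Q y -> phi (x**y) = phi x + phi y) -> phi 1 = 0.
Proof. intros [H1 _] Hp. pose proof (Hp 1 1 H1 H1). rewrite mul1 in H. lia. Qed.
Lemma phi_V (Q : G -> Prop) (phi : G -> Z) x : is_subgroup Q ->
  (forall x y, Q x -> Q y -> phi (x**y) = phi x + phi y) -> Q x -> phi (inv x) = - phi x.
Proof. intros HQ Hp Hx. pose proof (phi_1 Q phi HQ Hp). destruct HQ as [H1 [HM HV]].
  pose proof (Hp (inv x) x (HV x Hx) Hx). rewrite mulV in H0. lia. Qed.
Lemma phi_gp (Q : G -> Prop) (phi : G -> Z) x k : is_subgroup Q ->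
  (forall x y, Q x -> Q y -> phi (x**y) = phi x + phi y) -> Q x -> phi (gp x k) = k * phi x.
Proof. intros HQ Hp Hx. pose proof (phi_1 Q phi HQ Hp) as P1.
  induction k using Z.peano_ind.
  - rewrite gp0; auto.
  - rewrite gp_succ, Hp, IHk; auto; try lia. apply sub_gp; auto.
  - rewrite gp_pred, Hp, IHk, (phi_V Q); auto; try lia. destruct HQ as [? [? ?]]; auto. apply sub_gp; auto.
Qed.

Section Hyp.
Hypothesis NI : no_involutions G.
Hypothesis SC : forall H : G -> Prop, nonabelian_subgroup H -> centralizer_in H.

Lemma lemmaK (Q : G -> Prop) (phi : G -> Z) (z : G) :
  is_subgroup Q -> (forall x y, Q x -> Q y -> phi (x**y) = phi x + phi y) ->
  Q z -> (forall x, Q x -> comm z x) -> phi z <> 0 ->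
  forall x y, Q x -> Q y -> comm x y.
Proof.
  intros HQ Hp Hz Hc Hv x y Hx Hy.
  destruct (classic (comm x y)) as [|Hn]; auto. exfalso.
  set (v := phi z) in *. set (q := 1 + v * v).
  set (H := fun w => Q w /\ (q | phi w)%Z).
  assert (P1 := phi_1 Q phi HQ Hp).
  destruct HQ as [Q1 [QM QV]] eqn:EQ.
  assert (HS : is_subgroup H).
  { split; [|split].
    - split; auto. rewrite P1. apply Z.divide_0_r.
    - intros a b [Ha Da] [Hb Db]. split; auto. rewrite Hp; auto. apply Z.divide_add_r; auto.
    - intros a [Ha Da]. split; auto. rewrite (phi_V Q); auto. apply Z.divide_opp_r; auto. }
  set (x' := x ** gp z (phi x * v)). set (y' := y ** gp z (phi y * v)).
  assert (Hx' : H x').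
  { split. apply QM; auto. apply sub_gp; auto.
    unfold x'. rewrite Hp, (phi_gp Q); auto. exists (phi x). unfold q, v; ring. apply sub_gp; auto. }
  assert (Hy' : H y').
  { split. apply QM; auto. apply sub_gp; auto.
    unfold y'. rewrite Hp, (phi_gp Q); auto. exists (phi y). unfold q, v; ring. apply sub_gp; auto. }
  assert (HN : nonabelian_subgroup H).
  { split; auto. exists x', y'. split; auto. split; auto. intro E. apply Hn.
    unfold x', y' in E.
    set (a := gp z (phi x * v)) in *. set (b := gp z (phi y * v)) in *.
    assert (Ca : forall w, Q w -> comm a w).
    { intros w Hw. apply comm_gp_l; auto. }
    assert (Cb : forall w, Q w -> comm b w).
    { intros w Hw. apply comm_gp_l; auto. }
    assert (Qa : Q a) by (apply sub_gp; auto).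
    assert (Qb : Q b) by (apply sub_gp; auto).
    assert (E1 : x ** a ** (y ** b) = x ** y ** (a ** b)).
    { rewrite <- !mulA. f_equal. rewrite mulA, (Ca y Hy), <- mulA. auto. }
    assert (E2 : y ** b ** (x ** a) = y ** x ** (a ** b)).
    { rewrite <- !mulA. f_equal. rewrite mulA, (Cb x Hx), <- mulA. f_equal. symmetry. apply Ca; auto. }
    rewrite E1, E2 in E.
    apply mul_cancel_r in E. exact E. }
  pose proof (SC H HN z) as Hz'.
  assert (H z).
  { apply Hz'. intros h [Hh _]. apply Hc; auto. }
  destruct H0 as [_ [t Ht]]. fold v in Ht. unfold q in Ht.
  apply Hv. destruct (Z.eq_dec t 0). subst t. lia.
  assert (E : v*v = t*t*((1+v*v)*(1+v*v))) by (rewrite Ht at 1 2; ring).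
  assert (t*t >= 1) by nia. nia.
Qed.

Lemma swap_cj y h : y ** h = h ** cj h y.
Proof. unfold cj. rewrite mulKr; auto. Qed.

Lemma NI_inv x : inv x = x -> x = 1.
Proof. intro H. apply NI. rewrite <- H at 1. apply mulV. Qed.

Lemma NI_sq x : x ** x = 1 -> x = 1.
Proof. apply NI. Qed.

Lemma gp2 x : gp x 2 = x ** x.
Proof. change 2 with (1 + 1). rewrite gp_add, gp1; auto. Qed.

Lemma lemmaB (g a : G) : a <> 1 -> cj g a = inv a -> False.
Proof.
  intros Ha Hg.
  assert (Fai : forall i, cj g (gp a i) = gp a (- i)).
  { intro i. rewrite cj_gp, Hg, gp_inv, gp_opp; auto. }
  assert (C2 : comm (gp g 2) a).
  { apply comm_sym. unfold comm. symmetry. apply cj_eq. rewrite gp2, cj_comp, Hg, cjV, Hg, invK; auto. }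
  assert (Fev : forall k i, cj (gp g (2*k)) (gp a i) = gp a i).
  { intros k i. apply cj_eq. rewrite gp_mul. apply comm_gp; auto. }
  assert (Fodd : forall k i, cj (gp g (2*k+1)) (gp a i) = gp a (- i)).
  { intros k i. rewrite gp_add, cj_comp, Fev, gp1, Fai; auto. }
  assert (Desc : forall m, m <> 0 -> gp g m = 1 -> False).
  { assert (D : forall n : nat, (n > 0)%nat -> gp g (Z.of_nat n) = 1 -> False).
    { intro n. induction n as [n IH] using (well_founded_induction lt_wf). intros Hn E.
      destruct (Z.Even_or_Odd (Z.of_nat n)) as [[k Hk]|[k Hk]].
      - rewrite Hk, Z.mul_comm, gp_mul, gp2 in E. apply NI_sq in E.
        apply (IH (Z.to_nat k)); try lia. rewrite Z2Nat.id by lia. auto.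
      - pose proof (Fodd k 1%Z) as F. rewrite <- Hk, E, cj_id, gp1 in F.
        change (-1) with (-(1)) in F. rewrite gp_opp, gp1 in F.
        apply Ha. apply NI_inv. auto. }
    intros m Hm E. destruct (Z_lt_le_dec m 0).
    - apply (D (Z.to_nat (- m))); try lia. rewrite Z2Nat.id by lia. rewrite gp_opp, E, inv1; auto.
    - apply (D (Z.to_nat m)); try lia. rewrite Z2Nat.id by lia. auto. }
  assert (Pow : forall m i, gp g m = gp a i -> m <> 0 -> False).
  { intros m i E Hm. apply (Desc m Hm). rewrite E.
    apply NI_inv. rewrite <- gp_opp, <- Fai, <- E. apply cj_eq.
    symmetry. apply gp_comm_base. }
  assert (PF : forall e1 e2 i i', gp g e1 ** gp a i ** (gp g e2 ** gp a i') =
             gp g (e1+e2) ** (cj (gp g e2) (gp a i) ** gp a i')).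
  { intros. rewrite gp_add. rewrite <- !mulA. f_equal. rewrite (mulA (gp a i)), (swap_cj (gp a i) (gp g e2)), <- mulA. auto. }
  assert (IF : forall e i, inv (gp g e ** gp a i) = gp g (-e) ** cj (gp g (-e)) (gp a (-i))).
  { intros. rewrite invM, <- swap_cj, !gp_opp. auto. }
  assert (Ev : forall j i, cj (gp g (6*j)) (gp a i) = gp a i).
  { intros. replace (6*j) with (2*(3*j)) by ring. apply Fev. }
  assert (Od : forall j i, cj (gp g (6*j+3)) (gp a i) = gp a (-i)).
  { intros. replace (6*j+3) with (2*(3*j+1)+1) by ring. apply Fodd. }
  set (H := fun x => exists j i, x = gp g (6*j) ** gp a i \/ x = gp g (6*j+3) ** gp a i).
  assert (HS : is_subgroup H).
  { split; [|split].
    - exists 0, 0. left. rewrite !gp0, mul1. auto.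
    - intros x y [j [i Hx]] [j' [i' Hy]].
      destruct Hx as [Hx|Hx]; destruct Hy as [Hy|Hy]; subst x y; rewrite PF.
      + exists (j+j'), (i+i'). left. rewrite Ev, <- gp_add. f_equal. f_equal. ring.
      + exists (j+j'), (-i+i'). right. rewrite Od, <- gp_add. f_equal. f_equal. ring.
      + exists (j+j'), (i+i'). right. rewrite Ev, <- gp_add. f_equal. f_equal. ring.
      + exists (j+j'+1), (-i+i'). left. rewrite Od, <- gp_add. f_equal. f_equal. ring.
    - intros x [j [i [Hx|Hx]]]; subst x; rewrite IF.
      + exists (-j), (-i). left. replace (-(6*j)) with (6*(-j)) by ring. rewrite Ev. auto.
      + exists (-j-1), i. right. replace (-(6*j+3)) with (6*(-j-1)+3) by ring. rewrite Od.
        rewrite Z.opp_involutive. auto. }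
  assert (HN : nonabelian_subgroup H).
  { split; auto. exists a, (gp g 3). split; [|split].
    - exists 0, 1%Z. left. rewrite gp0, mul1, gp1. auto.
    - exists 0, 0. right. rewrite gp0, mulr1. auto.
    - intro E. assert (C3 : cj (gp g 3) a = inv a).
      { replace 3 with (6*0+3) by ring. rewrite <- (gp1 a). rewrite Od, gp_opp. auto. }
      rewrite swap_cj, C3 in E. apply mul_cancel_l in E. apply Ha, NI_inv. auto. }
  assert (Hc : H (gp g 2)).
  { apply (SC H HN). intros h [j [i [Hh|Hh]]]; subst h; apply (comm_M _ _ _);
    try (apply comm_gp_l, comm_sym, comm_gp_l, comm_refl);
    try (apply comm_gp_r; auto). }
  destruct Hc as [j [i [E|E]]].
  - apply (Pow (-(6*j) + 2) i). rewrite gp_add, gp_opp, E, mulKl. auto. lia.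
  - apply (Pow (-(6*j+3) + 2) i). rewrite gp_add, gp_opp, E, mulKl. auto. lia.
Qed.
Section Heis.
Variables h c z : G.
Hypothesis Hhc : cj h c = c ** z.
Hypothesis Hhz : comm h z.
Hypothesis Hcz : comm c z.

Lemma heis_cj a b : cj (gp h a) (gp c b) = gp c b ** gp z (a * b).
Proof.
  assert (F1 : forall b, cj h (gp c b) = gp c b ** gp z b).
  { intro. rewrite cj_gp, Hhc, gp_mulC; auto. }
  assert (Fz : forall k y, cj (gp h k) (gp z y) = gp z y).
  { intros. apply cj_eq. apply comm_gp; auto. }
  induction a using Z.peano_ind.
  - rewrite gp0, cj_id, Z.mul_0_l, gp0, mulr1. auto.
  - rewrite gp_succ, cj_comp, F1, cjM, IHa, Fz, <- mulA, <- gp_add. f_equal. f_equal. ring.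
  - rewrite gp_pred, cj_comp.
    assert (E : cj (inv h) (gp c b) = gp c b ** gp z (- b)).
    { assert (Fz1 : forall y, cj h (gp z y) = gp z y) by (intro; apply cj_eq, comm_gp_r; auto).
      apply (cj_inj h). rewrite cj_inv_l, cjM, F1, Fz1, <- mulA, <- gp_add.
      rewrite Z.add_opp_diag_r, gp0, mulr1. auto. }
    rewrite E, cjM, IHa, Fz, <- mulA, <- gp_add. f_equal. f_equal. rewrite <- Z.sub_1_r. ring.
Qed.

Definition NF a b e := gp h a ** gp c b ** gp z e.

Lemma NF_mul a b e a' b' e' : NF a b e ** NF a' b' e' = NF (a+a') (b+b') (e+e'+a'*b).
Proof.
  unfold NF.
  assert (L1 : forall k e X, gp z e ** (gp h k ** X) = gp h k ** (gp z e ** X)).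
  { intros. rewrite !mulA. f_equal. apply comm_gp; auto. apply comm_sym; auto. }
  assert (L2 : forall k e X, gp z e ** (gp c k ** X) = gp c k ** (gp z e ** X)).
  { intros. rewrite !mulA. f_equal. apply comm_gp; auto. apply comm_sym; auto. }
  assert (L3 : forall a b X, gp c b ** (gp h a ** X) = gp h a ** (gp c b ** (gp z (a*b) ** X))).
  { intros. rewrite !mulA. f_equal. rewrite swap_cj, heis_cj, mulA. auto. }
  rewrite <- !mulA. rewrite L1, L2, L3, L2.
  replace (e + e' + a' * b) with (a' * b + (e + e')) by ring.
  rewrite !gp_add. rewrite <- !mulA. auto.
Qed.

Lemma NF0 : NF 0 0 0 = 1.
Proof. unfold NF. rewrite !gp0, !mul1. auto. Qed.

Lemma NF_inv a b e : inv (NF a b e) = NF (-a) (-b) (-e + a*b).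
Proof. symmetry. apply inv_uniq. rewrite NF_mul. rewrite <- NF0. f_equal; ring. Qed.

Lemma NF_cancel a b e e' : NF a b e = NF a b e' -> gp z e = gp z e'.
Proof. unfold NF. intro H. apply mul_cancel_l in H. auto. Qed.

Lemma heis_false : (forall k, k <> 0 -> gp z k <> 1) -> False.
Proof.
  intro Hz.
  assert (Zeq : forall e e', gp z e = gp z e' -> e = e').
  { intros e e' E. destruct (Z.eq_dec (e - e') 0). lia. exfalso. apply (Hz (e - e')); auto.
    rewrite gp_sub, E, mulVr. auto. }
  assert (Canc : forall a b e a' b' e', NF a b e = NF a' b' e' -> a = a' -> b = b' -> e = e').
  { intros a b e a' b' e' E Ha Hb. subst. apply NF_cancel, Zeq in E. auto. }
  set (H := fun x => exists a b e, x = NF (2*a) (2*b) (4*e)).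
  assert (HS : is_subgroup H).
  { split; [|split].
    - exists 0, 0, 0. rewrite <- NF0. auto.
    - intros x y [a [b [e Hx]]] [a' [b' [e' Hy]]]. subst. rewrite NF_mul.
      exists (a+a'), (b+b'), (e+e'+a'*b). f_equal; ring.
    - intros x [a [b [e Hx]]]. subst. rewrite NF_inv. exists (-a), (-b), (-e + a*b). f_equal; ring. }
  assert (HN : nonabelian_subgroup H).
  { split; auto. exists (NF 2 0 0), (NF 0 2 0). split; [|split].
    - exists 1%Z, 0, 0. auto.
    - exists 0, 1%Z, 0. auto.
    - intro E. rewrite !NF_mul in E. apply Canc in E; [lia|ring|ring]. }
  assert (Hc : H (NF 0 0 1)).
  { apply (SC H HN). intros x [a [b [e Hx]]]. subst. rewrite !NF_mul. f_equal; ring. }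
  destruct Hc as [a [b [e E]]].
  assert (E1 : NF (2*a) (2*b) (4*e - 1 + 0) = 1).
  { rewrite <- (mulVr (NF 0 0 1)). rewrite E at 1. rewrite NF_inv, NF_mul. f_equal; ring. }
  assert (A0 : 2 * a = 0).
  { assert (C : NF 0 1 0 ** NF (2*a) (2*b) (4*e - 1 + 0) = NF (2*a) (2*b) (4*e - 1 + 0) ** NF 0 1 0).
    { rewrite E1, mul1, mulr1. auto. }
    rewrite !NF_mul in C. apply Canc in C; [lia|ring|ring]. }
  assert (B0 : 2 * b = 0).
  { assert (C : NF 1 0 0 ** NF (2*a) (2*b) (4*e - 1 + 0) = NF (2*a) (2*b) (4*e - 1 + 0) ** NF 1 0 0).
    { rewrite E1, mul1, mulr1. auto. }
    rewrite !NF_mul in C. apply Canc in C; [lia|ring|ring]. }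
  rewrite A0, B0 in E1. unfold NF in E1. rewrite !gp0, !mul1 in E1.
  rewrite <- (gp0 z) in E1. apply Zeq in E1. lia.
Qed.
End Heis.
Definition finite_set (P : G -> Prop) := exists l : list G, forall x, P x -> In x l.
Definition abelian_on (P : G -> Prop) := forall x y, P x -> P y -> comm x y.
Definition series (S : nat -> G -> Prop) (n : nat) : Prop :=
  (forall x, S 0%nat x <-> x = 1) /\
  (forall i, (i <= n)%nat -> is_subgroup (S i)) /\
  (forall i, (i <= n)%nat -> forall p x, S n p -> S i x -> S i (cj p x)) /\
  (forall i, (i < n)%nat -> (forall x, S i x -> S (Datatypes.S i) x) /\
       cyclic_factor (S (Datatypes.S i)) (S i)).

Lemma series_mono S n i j x : series S n -> (i <= j <= n)%nat -> S i x -> S j x.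
Proof.
  intros [_ [_ [_ Hs]]] Hij. induction j.
  - assert (i = 0%nat) by lia. subst; auto.
  - intros Hx. destruct (Nat.eq_dec i (Datatypes.S j)). subst; auto.
    apply (Hs j). lia. apply IHj; auto. lia.
Qed.

Lemma sigma_fin S N g : series S N ->
  (forall i k x, (i <= N)%nat -> S i x -> S i (cj (gp g k) x)) ->
  (abelian_on (S N) \/ finite_set (S N)) ->
  exists d, d > 0 /\ forall x, S N x -> comm (gp g d) x.
Proof.
  intros Ser Hn Hab.
  assert (Ser' := Ser). destruct Ser' as [S0 [Ssub [_ Sfac]]].
  enough (forall j, (j <= N)%nat -> exists d, d > 0 /\ forall x, S j x -> comm (gp g d) x) by auto.
  induction j; intro Hj.
  - exists 1%Z. split. lia. intros x Hx. apply S0 in Hx. subst. apply comm_1.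
  - destruct IHj as [d [Hd0 Hd]]. lia.
    destruct (Sfac j ltac:(lia)) as [_ [c [Hc Gen]]].
    set (h := gp g d).
    assert (Hcx : forall t, S (Datatypes.S j) (cj (gp h t) c)).
    { intro t. unfold h. rewrite <- gp_mul. apply Hn; auto. }
    assert (hB : forall b t, S j b -> cj (gp h t) b = b).
    { intros b t Hb. apply cj_eq. apply comm_gp_l. apply Hd; auto. }
    assert (SjN : forall x, S j x -> S N x) by (intros; apply (series_mono S N j N); auto; lia).
    assert (Sj1N : forall x, S (Datatypes.S j) x -> S N x)
      by (intros; apply (series_mono S N (Datatypes.S j) N); auto; lia).
    assert (SjS : is_subgroup (S j)) by (apply Ssub; lia).
    enough (KEY : exists e, e > 0 /\ comm (gp h e) c).
    { destruct KEY as [e [He Ce]]. exists (d * e). split. nia.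
      intros x Hx. destruct (Gen x Hx) as [k [a [Ha E]]]. subst x.
      rewrite gp_mul. fold h. apply comm_M. apply comm_gp_r; auto.
      apply comm_gp_l. unfold h. apply Hd; auto. }
    destruct Hab as [Hab|[L HL]].
    2:{ set (u := fun t : nat => cj (gp h (Z.of_nat t)) c).
        destruct (PH_list 1 L u) as [t1 [t2 [Ht E]]].
        { intros t _. apply HL. apply Sj1N. apply Hcx. }
        exists (Z.of_nat t2 - Z.of_nat t1). split. lia.
        apply cj_eq. unfold u in E.
        apply (f_equal (cj (gp h (- Z.of_nat t1)))) in E. rewrite !cj_gp_add in E.
        rewrite Z.add_opp_diag_r, gp0, cj_id in E. replace (Z.of_nat t2 - Z.of_nat t1) with (Z.of_nat t2 + - Z.of_nat t1) by lia. symmetry. exact E. }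
    assert (POST : forall t0 b0, t0 > 0 -> S j b0 -> cj (gp h t0) c = c ** b0 ->
                   exists e, e > 0 /\ comm (gp h e) c).
    { intros t0 b0 Ht0 Hb0 E0. set (h' := gp h t0). assert (E0' : cj h' c = c ** b0) by exact E0.
      assert (PW : forall n : nat, cj (gp h' (Z.of_nat n)) c = c ** gp b0 (Z.of_nat n)).
      { induction n.
        - change (Z.of_nat 0) with 0. rewrite !gp0, cj_id, mulr1. auto.
        - rewrite Nat2Z.inj_succ, !gp_succ, cj_comp, E0', cjM, IHn.
          unfold h'. rewrite <- gp_mul, hB by auto. rewrite <- mulA. f_equal. apply gp_comm_base. }
      destruct (classic (exists n : nat, (n > 0)%nat /\ gp b0 (Z.of_nat n) = 1)) as [[n [Hn0 En]]|Hno].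
      - exists (t0 * Z.of_nat n). split. nia. apply cj_eq. rewrite gp_mul. fold h'.
        rewrite PW, En, mulr1. auto.
      - exfalso. apply (heis_false h' c b0 E0).
        + apply cj_eq. unfold h'. apply hB; auto.
        + apply Hab; [apply Sj1N; auto | apply SjN; auto].
        + intros k Hk Ek. destruct (Z_lt_le_dec k 0).
          * apply Hno. exists (Z.to_nat (-k)). split. lia. rewrite Z2Nat.id by lia.
            rewrite gp_opp, Ek, inv1. auto.
          * apply Hno. exists (Z.to_nat k). split. lia. rewrite Z2Nat.id by lia. auto. }
    assert (Sj1S : is_subgroup (S (Datatypes.S j))) by (apply Ssub; lia).
    destruct (classic (exists m, m > 0 /\ S j (gp c m))) as [[m [Hm Hcm]]|NoPow].
    { set (kf := fun t : nat => epsilon (inhabits 0%Z)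
               (fun k => exists b, S j b /\ cj (gp h (Z.of_nat t)) c = gp c k ** b)).
      assert (Hk : forall t : nat, exists b, S j b /\ cj (gp h (Z.of_nat t)) c = gp c (kf t) ** b).
      { intro t. unfold kf. apply epsilon_spec. apply Gen. apply Hcx. }
      set (r := fun t => Z.to_nat (kf t mod m)).
      destruct (PH (Z.to_nat m) r) as [t1 [t2 [Ht E]]].
      { intros t _. unfold r. pose proof (Z.mod_pos_bound (kf t) m ltac:(lia)). lia. }
      unfold r in E. apply Z2Nat.inj in E; try (apply Z.mod_pos_bound; lia).
      destruct (Hk t1) as [b1 [Hb1 E1]]. destruct (Hk t2) as [b2 [Hb2 E2]].
      set (k1 := kf t1) in *. set (k2 := kf t2) in *.
      set (q := k2 / m - k1 / m).
      assert (Ek : k2 = k1 + m * q).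
      { unfold q. pose proof (Z.div_mod k1 m ltac:(lia)). pose proof (Z.div_mod k2 m ltac:(lia)). lia. }
      set (b0 := inv b1 ** (gp (gp c m) q ** b2)).
      assert (Hb0 : S j b0).
      { pose proof SjS as [_ [SM SV]]. unfold b0. apply SM. apply SV; auto. apply SM; [apply sub_gp; auto | auto]. }
      apply (POST (Z.of_nat t2 - Z.of_nat t1) b0). lia. auto.
      assert (E3 : cj (gp h (Z.of_nat t2)) c = cj (gp h (Z.of_nat t1)) c ** b0).
      { rewrite E2, E1. unfold b0. rewrite <- (mulA (gp c k1) b1), mulKr.
        rewrite Ek, gp_add, gp_mul, mulA. auto. }
      apply (f_equal (cj (gp h (- Z.of_nat t1)))) in E3.
      rewrite cj_gp_add, cjM, cj_gp_add, Z.add_opp_diag_r, gp0, cj_id, (hB b0 _ Hb0) in E3.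
      rewrite <- E3. reflexivity. }
    { assert (NP : forall m, m <> 0 -> ~ S j (gp c m)).
      { intros m Hm0 Hcm. destruct (Z_lt_le_dec m 0).
        * apply NoPow. exists (- m). split. lia. rewrite gp_opp. pose proof SjS as [_ [_ SV]]. auto.
        * apply NoPow. exists m. split. lia. auto. }
      destruct (Gen _ (Hcx 1%Z)) as [k [b [Hb Eb]]].
      destruct (Gen _ (Hcx (-1)%Z)) as [k' [b' [Hb' Eb']]].
      rewrite gp1 in Eb. change (-1) with (-(1)) in Eb'. rewrite gp_opp, gp1 in Eb'.
      assert (hB1 : forall x, S j x -> cj h x = x).
      { intros x Hx. rewrite <- (gp1 h). apply hB; auto. }
      assert (Cb : comm (gp c k) b).
      { apply Hab. apply Sj1N. apply sub_gp; auto. apply SjN; auto. }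
      assert (Ec : c = gp c (k * k') ** (gp b k' ** b')).
      { rewrite <- (cj_inv_l h c) at 1. rewrite Eb', cjM, cj_gp, Eb, hB1 by auto.
        rewrite gp_mulC by auto. rewrite <- gp_mul, mulA. auto. }
      assert (Ekk : k * k' = 1%Z).
      { destruct (Z.eq_dec (k*k') 1%Z) as [|Hne]; auto. exfalso.
        apply (NP (- (k * k') + 1)). lia.
        rewrite gp_add, gp_opp, gp1. rewrite Ec at 2. rewrite mulKl.
        pose proof SjS as [_ [SM _]]. apply SM; auto. apply sub_gp; auto. }
      destruct (Z.eq_mul_1 k k' Ekk) as [K1|K1]; subst k.
      + apply (POST 1%Z b). lia. auto. rewrite gp1, Eb, gp1. auto.
      + exists 2. split. lia. apply cj_eq. change 2 with (1 + 1)%Z. rewrite gp_add, gp1, cj_comp, Eb.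
        rewrite cjM, cj_gp, Eb, hB1 by auto. change (gpow c (-(1))) with (gp c (-(1))). rewrite !gp_opp, !gp1, invM, invK.
        assert (Ccb : comm c b).
        { apply Hab. apply Sj1N; auto. apply SjN; auto. }
        rewrite <- mulA, Ccb, mulKl. auto. }
Qed.

Lemma fin_ext (B P : G -> Prop) c m : is_subgroup B -> finite_set B ->
  (forall x, P x -> exists k b, B b /\ x = gp c k ** b) -> m > 0 -> B (gp c m) -> finite_set P.
Proof.
  intros HB [LB HLB] Gen Hm Hcm.
  exists (flat_map (fun r => map (fun b => gp c (Z.of_nat r) ** b) LB) (seq 0 (Z.to_nat m))).
  intros x Hx. destruct (Gen x Hx) as [k [b [Hb E]]]. subst x.
  apply in_flat_map. exists (Z.to_nat (k mod m)). split.
  - apply in_seq. pose proof (Z.mod_pos_bound k m ltac:(lia)). lia.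
  - apply in_map_iff. exists (gp (gp c m) (k / m) ** b). split.
    + rewrite Z2Nat.id by (apply Z.mod_pos_bound; lia). rewrite mulA, <- gp_mul, <- gp_add.
      f_equal. f_equal. pose proof (Z.div_mod k m ltac:(lia)). lia.
    + apply HLB. pose proof HB as [_ [HM _]]. apply HM; auto. apply sub_gp; auto.
Qed.

Lemma expo (B : G -> Prop) c : is_subgroup B -> (forall k, k <> 0 -> ~ B (gp c k)) ->
  forall k a k' a', B a -> B a' -> gp c k ** a = gp c k' ** a' -> k = k'.
Proof.
  intros [B1 [BM BV]] Hc k a k' a' Ha Ha' E.
  destruct (Z.eq_dec (-k' + k) 0). lia. exfalso. apply (Hc (-k' + k)); auto.
  rewrite gp_add, gp_opp. replace (inv (gp c k') ** gp c k) with (a' ** inv a). auto.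
  apply (mul_cancel_r a). rewrite mulKr', <- mulA, E, mulKl. auto.
Qed.

Lemma fin_zero S : (forall x, S 0%nat x <-> x = 1) -> finite_set (S 0%nat).
Proof. intro H. exists (1 :: nil). intros x Hx. apply H in Hx. subst. left; auto. Qed.

Lemma TOP S N : series S N -> abelian_on (S N) -> ~ finite_set (S N) ->
  exists j c M, (j < N)%nat /\ S (Datatypes.S j) c /\
    (forall x, S (Datatypes.S j) x -> exists k b, S j b /\ x = gp c k ** b) /\
    (forall k, k <> 0 -> ~ S j (gp c k)) /\ M > 0 /\
    (forall x, S N x -> S (Datatypes.S j) (gp x M)).
Proof.
  intros Ser Hab Hinf.
  pose proof Ser as [S0 [Ssub [_ Sfac]]].
  enough (forall N', (N' <= N)%nat -> finite_set (S N') \/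
    exists j c M, (j < N')%nat /\ S (Datatypes.S j) c /\
    (forall x, S (Datatypes.S j) x -> exists k b, S j b /\ x = gp c k ** b) /\
    (forall k, k <> 0 -> ~ S j (gp c k)) /\ M > 0 /\
    (forall x, S N' x -> S (Datatypes.S j) (gp x M))) as H.
  { destruct (H N (le_n _)) as [F|R]. contradiction. destruct R as [j [c [M R]]]. exists j, c, M. tauto. }
  induction N'; intro HN'.
  - left. apply fin_zero; auto.
  - destruct (Sfac N' ltac:(lia)) as [Sinc [c' [Hc' Gen']]].
    assert (SN'S : is_subgroup (S N')) by (apply Ssub; lia).
    destruct (classic (exists m, m > 0 /\ S N' (gp c' m))) as [[m [Hm Hcm]]|Hno].
    + destruct (IHN' ltac:(lia)) as [F|[j [c [M [Hj [Hc [Gen [Inf [HM HX]]]]]]]]].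
      * left. apply (fin_ext (S N') _ c' m); auto.
      * right. exists j, c, (m * M). split. lia. split. auto. split. auto. split. auto. split. nia.
        intros x Hx. rewrite gp_mul. apply HX.
        destruct (Gen' x Hx) as [k [b [Hb E]]]. subst x.
        assert (SNn : forall y, S (Datatypes.S N') y -> S N y)
          by (intros; apply (series_mono S N (Datatypes.S N') N); auto).
        rewrite gp_mulC. pose proof SN'S as [_ [SM _]]. apply SM.
        rewrite <- gp_mul, Z.mul_comm, gp_mul. apply sub_gp; auto.
        apply sub_gp; auto.
        apply Hab; apply SNn; [apply sub_gp; [apply Ssub; lia | auto] | apply Sinc; auto].
    + right. exists N', c', 1%Z. split. lia. split. auto. split. auto. split.
      { intros k Hk Hck. destruct (Z_lt_le_dec k 0).
        - apply Hno. exists (- k). split. lia. rewrite gp_opp. pose proof SN'S as [_ [_ SV]]. auto.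
        - apply Hno. exists k. split. lia. auto. }
      split. lia. intros x Hx. rewrite gp1. auto.
Qed.

Fixpoint Nprod (h c : G) (t : nat) : G :=
  match t with O => 1 | Datatypes.S t => Nprod h c t ** cj (gp h (Z.of_nat t)) c end.

Lemma KK (A : G -> Prop) (psi : G -> Z) (h c : G) (m' d' : Z) :
  is_subgroup A -> abelian_on A ->
  (forall t x, A x -> A (cj (gp h t) x)) ->
  (forall x y, A x -> A y -> psi (x ** y) = psi x + psi y) ->
  (forall x, A x -> psi (cj h x) = psi x) ->
  m' > 0 -> A (gp h m') -> d' > 0 -> (forall x, A x -> comm (gp h d') x) ->
  A c -> psi c <> 0 ->
  forall k a l b, A a -> A b -> comm (gp h k ** a) (gp h l ** b).
Proof.
  intros HA Hab Hn Hp Hinv Hm' Ahm Hd' Hd Ac Hc.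
  pose proof HA as [A1 [AM AV]].
  set (Q := fun x => exists k a, A a /\ x = gp h k ** a).
  assert (Prod : forall k a l b, gp h k ** a ** (gp h l ** b) = gp h (k + l) ** (cj (gp h l) a ** b)).
  { intros. rewrite <- !mulA. rewrite (mulA a (gp h l) b), (swap_cj a (gp h l)), gp_add, <- !mulA. auto. }
  assert (HQ : is_subgroup Q).
  { split; [|split].
    - exists 0, 1. split; auto. rewrite gp0, mul1. auto.
    - intros x y [k [a [Ha Ex]]] [l [b [Hb Ey]]]. subst. rewrite Prod.
      exists (k + l), (cj (gp h l) a ** b). split; auto.
    - intros x [k [a [Ha Ex]]]. subst. exists (-k), (cj (gp h (-k)) (inv a)). split; auto.
      rewrite invM, swap_cj, gp_opp. auto. }
  assert (Inv : forall t x, A x -> psi (cj (gp h t) x) = psi x).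
  { assert (Ah : forall x, A x -> A (cj h x)) by (intros; rewrite <- (gp1 h); auto).
    assert (Ah' : forall x, A x -> A (cj (inv h) x)) by (intros; rewrite <- (gp1 h), <- gp_opp; auto).
    induction t using Z.peano_ind; intros x Hx.
    - rewrite gp0, cj_id. auto.
    - rewrite gp_succ, cj_comp, IHt, Hinv; auto.
    - rewrite gp_pred, cj_comp, IHt; auto.
      rewrite <- (Hinv (cj (inv h) x)). rewrite cj_inv_l. auto. auto. }
  set (P := psi (gp h m')).
  assert (WD : forall k a k' a', A a -> A a' -> gp h k ** a = gp h k' ** a' ->
                k * P + m' * psi a = k' * P + m' * psi a').
  { intros k a k' a' Ha Ha' E.
    assert (Ey : gp h (-k' + k) = a' ** inv a).
    { rewrite gp_add, gp_opp. apply (mul_cancel_r a). rewrite mulKr', <- mulA, E, mulKl. auto. }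
    assert (Ay : A (gp h (-k' + k))) by (rewrite Ey; auto).
    pose proof (phi_gp A psi (gp h (-k' + k)) m' HA Hp Ay) as E1.
    rewrite <- gp_mul, Z.mul_comm, gp_mul in E1. fold P in E1.
    rewrite (phi_gp A psi (gp h m') (-k' + k) HA Hp Ahm) in E1. fold P in E1.
    rewrite Ey, Hp, (phi_V A) in E1; auto. nia. }
  set (phi := fun x => epsilon (inhabits 0%Z)
       (fun v => exists k a, A a /\ x = gp h k ** a /\ v = k * P + m' * psi a)).
  assert (PhiQ : forall k a, A a -> phi (gp h k ** a) = k * P + m' * psi a).
  { intros k a Ha. unfold phi.
    destruct (epsilon_spec (inhabits 0%Z) (fun v => exists k0 a0, A a0 /\ gp h k ** a = gp h k0 ** a0 /\
         v = k0 * P + m' * psi a0)) as [k0 [a0 [Ha0 [E0 V0]]]].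
    { exists (k * P + m' * psi a), k, a. auto. }
    rewrite V0. symmetry. apply WD; auto. }
  assert (PhiH : forall x y, Q x -> Q y -> phi (x ** y) = phi x + phi y).
  { intros x y [k [a [Ha Ex]]] [l [b [Hb Ey]]]. subst. rewrite Prod, !PhiQ, Hp, Inv; auto. ring. }
  set (z := Nprod h c (Z.to_nat d')).
  assert (NA : forall t, A (Nprod h c t)).
  { induction t; simpl; auto. }
  assert (Npsi : forall t, psi (Nprod h c t) = Z.of_nat t * psi c).
  { induction t. simpl. apply (phi_1 A); auto.
    simpl Nprod. rewrite Hp, IHt, Inv; auto. rewrite Nat2Z.inj_succ. ring. }
  assert (Nid : forall t, cj h (Nprod h c t) ** c = Nprod h c t ** cj (gp h (Z.of_nat t)) c).
  { induction t.
    - simpl Nprod. change (Z.of_nat 0) with 0. rewrite cj1, gp0, cj_id, !mul1. auto.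
    - simpl Nprod. rewrite cjM.
      assert (E : cj h (cj (gp h (Z.of_nat t)) c) = cj (gp h (Z.of_nat (Datatypes.S t))) c).
      { rewrite <- cj_comp, Nat2Z.inj_succ, <- Z.add_1_r, gp_add, gp1. auto. }
      rewrite E, <- mulA. rewrite (Hab (cj (gp h (Z.of_nat (Datatypes.S t))) c) c); auto.
      rewrite mulA, IHt, <- !mulA. auto. }
  assert (Cz : comm h z).
  { apply comm_sym. unfold comm. symmetry. apply cj_eq.
    apply (mul_cancel_r c). unfold z. rewrite Nid, Z2Nat.id by lia.
    f_equal. apply cj_eq. apply Hd; auto. }
  assert (ZQ : forall x, Q x -> comm z x).
  { intros x [k [a [Ha Ex]]]. subst. apply comm_M.
    apply comm_sym, comm_gp_l, Cz. apply Hab; auto. unfold z; auto. }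
  intros k a l b Ha Hb.
  apply (lemmaK Q phi z HQ PhiH).
  - exists 0, z. split. unfold z; auto. rewrite gp0, mul1. auto.
  - auto.
  - rewrite <- (mul1 z). rewrite <- (gp0 h). rewrite PhiQ. unfold z. rewrite Npsi, Z2Nat.id by lia. nia.
    unfold z; auto.
  - exists k, a. auto.
  - exists l, b. auto.
Qed.

Lemma ProdG h k a l b : gp h k ** a ** (gp h l ** b) = gp h (k + l) ** (cj (gp h l) a ** b).
Proof. rewrite <- !mulA. rewrite (mulA a (gp h l) b), (swap_cj a (gp h l)), gp_add, <- !mulA. auto. Qed.

Lemma mainT : forall n S, series S n -> ~ finite_set (S n) -> abelian_on (S n).
Proof.
  induction n as [|n IH]; intros S Ser Hinf.
  { exfalso. apply Hinf. apply fin_zero. apply Ser. }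
  pose proof Ser as [S0 [Ssub [Snorm Sfac]]].
  destruct (Sfac n ltac:(lia)) as [Sinc [g [Hg Gen]]].
  assert (PS : is_subgroup (S (Datatypes.S n))) by (apply Ssub; lia).
  assert (AS : is_subgroup (S n)) by (apply Ssub; lia).
  pose proof AS as [A1 [AM AV]].
  assert (SerA : series S n).
  { split; [auto|split; [|split]].
    - intros; apply Ssub; lia.
    - intros i Hi p x Hp Hx. apply Snorm; auto.
    - intros i Hi. apply Sfac. lia. }
  assert (IHA : ~ finite_set (S n) -> abelian_on (S n)) by (apply IH; auto).
  assert (Norm : forall i k x, (i <= Datatypes.S n)%nat -> S i x -> S i (cj (gp g k) x)).
  { intros. apply Snorm; auto. apply sub_gp; auto. }
  assert (NormA : forall i k x, (i <= n)%nat -> S i x -> S i (cj (gp g k) x)).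
  { intros. apply Norm; auto. }
  destruct (classic (exists m, m <> 0 /\ S n (gp g m))) as [[m0 [Hm0 Hgm0]]|NoPow].
  2:{ (* case 1: infinite top factor *)
    assert (NP : forall k, k <> 0 -> ~ S n (gp g k)) by (intros k Hk Hgk; apply NoPow; eauto).
    assert (Hor : abelian_on (S n) \/ finite_set (S n)).
    { destruct (classic (finite_set (S n))); auto. }
    destruct (sigma_fin S n g SerA NormA Hor) as [d [Hd Hdc]].
    set (phi := fun x => epsilon (inhabits 0%Z) (fun k => exists a, S n a /\ x = gp g k ** a)).
    assert (PhiP : forall k a, S n a -> phi (gp g k ** a) = k).
    { intros k a Ha. unfold phi.
      destruct (epsilon_spec (inhabits 0%Z) (fun k0 => exists a0, S n a0 /\ gp g k ** a = gp g k0 ** a0))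
        as [a0 [Ha0 E]]. eauto.
      symmetry. apply (expo (S n) g AS NP k a _ a0); auto. }
    assert (PhiH : forall x y, S (Datatypes.S n) x -> S (Datatypes.S n) y -> phi (x ** y) = phi x + phi y).
    { intros x y Hx Hy. destruct (Gen x Hx) as [k [a [Ha Ex]]]. destruct (Gen y Hy) as [l [b [Hb Ey]]].
      subst. rewrite ProdG, !PhiP; auto. }
    intros x y Hx Hy.
    apply (lemmaK (S (Datatypes.S n)) phi (gp g d) PS PhiH); auto.
    - apply sub_gp; auto.
    - intros w Hw. destruct (Gen w Hw) as [k [a [Ha Ew]]]. subst. apply comm_M.
      apply gp_comm_self. apply Hdc; auto.
    - rewrite <- (mulr1 (gp g d)). rewrite PhiP; auto. lia. }
  (* case 2: finite top factor *)
  assert (Hm : exists m, m > 0 /\ S n (gp g m)).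
  { destruct (Z_lt_le_dec m0 0). exists (- m0). split. lia. rewrite gp_opp; auto.
    exists m0. split. lia. auto. }
  clear m0 Hm0 Hgm0. destruct Hm as [m [Hm Hgm]].
  assert (InfA : ~ finite_set (S n)).
  { intro F. apply Hinf. apply (fin_ext (S n) _ g m); auto. }
  assert (HabA : abelian_on (S n)) by auto.
  destruct (sigma_fin S n g SerA NormA (or_introl HabA)) as [d [Hd Hdc]].
  destruct (TOP S n SerA HabA InfA) as [j [c [M [Hj [Hc [GenC [InfC [HM HXM]]]]]]]].
  assert (SjS : is_subgroup (S j)) by (apply Ssub; lia).
  assert (Sj1S : is_subgroup (S (Datatypes.S j))) by (apply Ssub; lia).
  assert (SjA : forall x, S j x -> S n x) by (intros; apply (series_mono S n j n); auto; lia).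
  assert (Sj1A : forall x, S (Datatypes.S j) x -> S n x)
    by (intros; apply (series_mono S n (Datatypes.S j) n); auto; lia).
  assert (AP : forall x, S n x -> S (Datatypes.S n) x) by auto.
  set (psi0 := fun x => epsilon (inhabits 0%Z) (fun k => exists b, S j b /\ x = gp c k ** b)).
  assert (Psi0 : forall k b, S j b -> psi0 (gp c k ** b) = k).
  { intros k b Hb. unfold psi0.
    destruct (epsilon_spec (inhabits 0%Z) (fun k0 => exists b0, S j b0 /\ gp c k ** b = gp c k0 ** b0))
      as [b0 [Hb0 E]]. eauto.
    symmetry. apply (expo (S j) c SjS InfC k b _ b0); auto. }
  pose proof SjS as [J1 [JM JV]].
  assert (Psi0H : forall x y, S (Datatypes.S j) x -> S (Datatypes.S j) y -> psi0 (x ** y) = psi0 x + psi0 y).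
  { intros x y Hx Hy. destruct (GenC x Hx) as [k [a [Ha Ex]]]. destruct (GenC y Hy) as [l [b [Hb Ey]]].
    subst. rewrite ProdG, !Psi0; auto. apply JM; auto. apply Snorm; auto. lia.
    apply AP, Sj1A, sub_gp; auto. }
  set (psi := fun x => psi0 (gp x M)).
  assert (PsiH : forall x y, S n x -> S n y -> psi (x ** y) = psi x + psi y).
  { intros x y Hx Hy. unfold psi. rewrite gp_mulC by (apply HabA; auto). apply Psi0H; auto. }
  assert (Psic : psi c = M).
  { unfold psi. rewrite <- (mulr1 (gp c M)). apply Psi0; auto. }
  assert (Eps : forall q, S (Datatypes.S n) q -> exists e, forall y, S (Datatypes.S j) y -> psi0 (cj q y) = e * psi0 y).
  { intros q Hq. assert (Hqc : S (Datatypes.S j) (cj q c)) by (apply Snorm; auto; lia).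
    destruct (GenC _ Hqc) as [e [s [Hs Es]]]. exists e. intros y Hy.
    destruct (GenC y Hy) as [k [b [Hb Ey]]]. subst y.
    rewrite cjM, cj_gp, Es, gp_mulC, <- gp_mul, <- mulA, !Psi0; auto.
    apply JM. apply sub_gp; auto. apply Snorm; auto. lia.
    apply HabA. apply sub_gp; auto. apply SjA; auto. }
  destruct (Eps g Hg) as [e He].
  assert (Psie : forall x, S n x -> psi (cj g x) = e * psi x).
  { intros x Hx. unfold psi. rewrite <- cj_gp. apply He; auto. }
  assert (E1 : e = 1%Z \/ e = (-1)%Z).
  { assert (Hig : S (Datatypes.S n) (inv g)) by (pose proof PS as [_ [_ PV]]; auto).
    destruct (Eps (inv g) Hig) as [e' He'].
    assert (Hc1 : psi0 c = 1%Z).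
    { rewrite <- (gp1 c), <- (mulr1 (gp c 1)). apply Psi0; auto. }
    assert (Hci : S (Datatypes.S j) (cj (inv g) c)) by (apply Snorm; auto; lia).
    pose proof (He _ Hci) as X. rewrite cj_inv_l, He', Hc1 in X; auto.
    apply Z.eq_mul_1 with (m := e'). lia. }
  assert (Ac : S n c) by auto.
  assert (Mne : psi c <> 0) by lia.
  destruct E1 as [E1|E1]; subst e.
  - intros x y Hx Hy.
    destruct (Gen x Hx) as [k [a [Ha Ex]]]. destruct (Gen y Hy) as [l [b [Hb Ey]]]. subst x y.
    apply (KK (S n) psi g c m d AS HabA (fun t x => NormA n t x (le_n _)) PsiH); auto.
    intros z Hz. rewrite Psie; auto. lia.
  - exfalso. set (h := gp g 2).
    assert (Hh2 : forall t, gp h t = gp g (2 * t)) by (intro; unfold h; rewrite gp_mul; auto).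
    assert (C2 : comm (gp h 1 ** 1) (gp h 0 ** c)).
    { apply (KK (S n) psi h c m d AS HabA); auto.
      - intros t x Hx. rewrite Hh2. apply NormA; auto.
      - intros x Hx. unfold h. rewrite gp2, cj_comp, !Psie; auto. lia.
      - rewrite Hh2, Z.mul_comm, gp_mul. apply sub_gp; auto.
      - intros x Hx. rewrite Hh2, Z.mul_comm, gp_mul. apply comm_gp_l. auto. }
    rewrite gp1, mulr1, gp0, mul1 in C2. unfold h in C2. rewrite gp2 in C2.
    assert (Cgg : cj g (cj g c) = c).
    { rewrite <- cj_comp. apply cj_eq. exact C2. }
    set (w := c ** inv (cj g c)).
    assert (Aw : S n w).
    { unfold w. apply AM; auto. }
    apply (lemmaB g w).
    + intro Ew. assert (psi w = 0) by (rewrite Ew; apply (phi_1 (S n)); auto).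
      unfold w in H. rewrite PsiH, (phi_V (S n)), Psie in H; auto. lia.
    + unfold w. rewrite cjM, cjV, Cgg, invM, invK. auto.
Qed.

End Hyp.
End Basics.

Theorem theorem4p1 (G : group) :
  infinite_group G -> supersoluble G -> no_involutions G ->
  (forall H : G -> Prop, nonabelian_subgroup H -> centralizer_in H) ->
  abelian_group G.
Proof.
  intros Hinf [n [S [S0 [Sall [Snorm Sfac]]]]] NI SC.
  assert (Ser : series G S n).
  { split; [auto|split; [|split]].
    - intros i Hi. apply (Snorm i Hi).
    - intros i Hi p x _ Hx. apply (Snorm i Hi). auto.
    - auto. }
  assert (Hf : ~ finite_set G (S n)).
  { intros [l Hl]. apply Hinf. exists l. intros x. apply Hl. apply Sall. }
  pose proof (mainT G NI SC n S Ser Hf) as Hab.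
  intros x y. apply Hab; apply Sall.
Qed.
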